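(* In the setting of the half-isotropic Björling construction (with data $Y_0,\hat Y_0,\psi_0,\gamma_{12}$, frame $P_1,P_2$ and the resulting functions $\mu_1,\mu_2,\rho_1,\rho_2,k_1,k_2,\gamma_{11}$ satisfying the structure equations below), let $y=[Y]$ be the resulting Willmore surface. Then $Y_0(\mathbb I)$ is a curve of umbilic points of $y$ if and only if $k_1=k_2\equiv0$ on $\mathbb I$.
   Context: Light cone model: $\mathbb R^5_1$ with $\langle x,y\rangle=-x_0y_0+\sum_{j=1}^4x_jy_j$; $\mathbb S^3$ the projectivized forward light cone. Data: $\psi_0:\mathbb I\to\mathbb S^4_1=\{\langle x,x\rangle=1\}$ non-constant real analytic; $Y_0$ a real analytic null curve with $\langle Y_0,\psi_0\rangle=\langle Y_0,\psi_0'\rangle=0$, $\langle Y_0',Y_0'\rangle=1$; $\hat Y_0$ real analytic null with $\langle\psi_0,\hat Y_0\rangle=0$, $\langle Y_0,\hat Y_0\rangle=-1$; $\gamma_{12}$ a real analytic function; unit $P_1\equiv Y_{0u}\bmod Y_0$, $P_1\perp\hat Y_0$, $P_2\perp\{\psi_0,Y_0,\hat Y_0,P_1\}$, $\det(Y_0,\hat Y_0,P_1,P_2,\psi_0)=1$; functions defined by $Y_{0u}=-\mu_1Y_0+P_1$, $\hat Y_{0u}=\mu_1\hat Y_0+\rho_1P_1+\rho_2P_2+4\gamma_{11}\psi_0$, $P_{1u}=\mu_2P_2+2k_1\psi_0+\hat Y_0+\rho_1Y_0$, $P_{2u}=-\mu_2P_1-2k_2\psi_0+\rho_2Y_0$,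 $\psi_{0u}=-2k_1P_1+2k_2P_2+4\gamma_{11}Y_0$. The resulting Willmore surface is the unique Willmore surface $y$ on a neighbourhood of $\mathbb I$ (coordinate $z=u+iv$) with canonical lift $Y$ ($\langle Y_z,Y_{\bar z}\rangle=\frac12$, $\langle Y_z,Y_z\rangle=0$) satisfying $Y|_{\mathbb I}=Y_0$, conformal Gauss map $\psi$ with $\psi|_{\mathbb I}=\psi_0$, and $\langle\psi_v|_{\mathbb I},\hat Y_0\rangle$ prescribed by $\gamma_{12}$. A point is umbilic if $\kappa=0$ there, where $Y_{zz}=-\frac s2Y+\kappa$ with $\kappa$ orthogonal to $Y,Y_z,Y_{\bar z},Y_{z\bar z}$. *)

(* Defs.v *)
From Stdlib Require Import Reals Lra.
Open Scope R_scope.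

Record V5 := mkV5 { x0 : R; x1 : R; x2 : R; x3 : R; x4 : R }.

Definition comp (X : V5) (i : nat) : R :=
  match i with 0 => x0 X | 1 => x1 X | 2 => x2 X | 3 => x3 X | 4 => x4 X | _ => 0 end.

Definition vadd (X Y : V5) : V5 :=
  mkV5 (x0 X + x0 Y) (x1 X + x1 Y) (x2 X + x2 Y) (x3 X + x3 Y) (x4 X + x4 Y).
Definition vscal (a : R) (X : V5) : V5 :=
  mkV5 (a * x0 X) (a * x1 X) (a * x2 X) (a * x3 X) (a * x4 X).
Definition vzero : V5 := mkV5 0 0 0 0 0.

Definition inner (X Y : V5) : R :=
  - x0 X * x0 Y + x1 X * x1 Y + x2 X * x2 Y + x3 X * x3 Y + x4 X * x4 Y.

Fixpoint sumto (n : nat) (f : nat -> R) : R :=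
  match n with O => 0 | S m => sumto m f + f m end.
Definition minor (A : nat -> nat -> R) (j : nat) : nat -> nat -> R :=
  fun i k => A (S i) (if Nat.ltb k j then k else S k).
Fixpoint det (n : nat) (A : nat -> nat -> R) : R :=
  match n with
  | O => 1
  | S m => sumto n (fun j => (-1) ^ j * A 0%nat j * det m (minor A j))
  end.
(** det(A1,...,A5) of five vectors (as rows; equal to the column version). *)
Definition det5 (A1 A2 A3 A4 A5 : V5) : R :=
  det 5 (fun i j => comp (match i with 0 => A1 | 1 => A2 | 2 => A3 | 3 => A4 | _ => A5 end) j).

(** Complexified vectors: pairs (real part, imaginary part), with the
    complex-bilinear extension of <,>, valued in pairs (Re, Im). *)
Record CV5 := mkCV5 { re : V5; im : V5 }.
Definition cinner (X Y : CV5) : R * R :=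
  (inner (re X) (re Y) - inner (im X) (im Y), inner (re X) (im Y) + inner (im X) (re Y)).

Definition inI (a b t : R) : Prop := a < t < b.

Definition analytic_at (f : R -> R) (t : R) : Prop :=
  exists r, 0 < r /\ exists c : nat -> R,
    forall x, Rabs (x - t) < r -> infinite_sum (fun n => c n * (x - t) ^ n) (f x).
Definition analytic_on (a b : R) (f : R -> R) : Prop :=
  forall t, inI a b t -> analytic_at f t.
Definition vanalytic_on (a b : R) (f : R -> V5) : Prop :=
  forall i, analytic_on a b (fun x => comp (f x) i).

Definition has_deriv (a b : R) (f f' : R -> V5) : Prop :=
  forall t, inI a b t -> forall i,
    derivable_pt_lim (fun x => comp (f x) i) t (comp (f' t) i).

(** Open subsets of the (u,v)-plane, z = u + i v. *)
Definition open2 (U : R -> R -> Prop) : Prop :=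
  forall u v, U u v -> exists e, 0 < e /\
    forall u' v', (u' - u) ^ 2 + (v' - v) ^ 2 < e ^ 2 -> U u' v'.

Definition has_pu (U : R -> R -> Prop) (f g : R -> R -> V5) : Prop :=
  forall u v, U u v -> forall i,
    derivable_pt_lim (fun x => comp (f x v) i) u (comp (g u v) i).
Definition has_pv (U : R -> R -> Prop) (f g : R -> R -> V5) : Prop :=
  forall u v, U u v -> forall i,
    derivable_pt_lim (fun y => comp (f u y) i) v (comp (g u v) i).

Definition smooth2 (U : R -> R -> Prop) (f : R -> R -> V5) : Prop :=
  forall i, exists D : nat -> nat -> R -> R -> R,
    (forall u v, U u v -> D 0%nat 0%nat u v = comp (f u v) i) /\
    (forall k l u v, U u v ->
       derivable_pt_lim (fun x => D k l x v) u (D (S k) l u v) /\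
       derivable_pt_lim (fun y => D k l u y) v (D k (S l) u v)).

(** Complex derivatives of Y from its real partials, d/dz = (d/du - i d/dv)/2. *)
Definition Yz_of (Yu Yv : V5) : CV5 := mkCV5 (vscal (1/2) Yu) (vscal (-1/2) Yv).
Definition Yzb_of (Yu Yv : V5) : CV5 := mkCV5 (vscal (1/2) Yu) (vscal (1/2) Yv).
Definition Yzzb_of (Yuu Yvv : V5) : CV5 := mkCV5 (vscal (1/4) (vadd Yuu Yvv)) vzero.
Definition Yzz_of (Yuu Yuv Yvv : V5) : CV5 :=
  mkCV5 (vscal (1/4) (vadd Yuu (vscal (-1) Yvv))) (vscal (-1/2) Yuv).
Definition creal (X : V5) : CV5 := mkCV5 X vzero.

Definition canonical_lift (U : R -> R -> Prop) (Y Yu Yv : R -> R -> V5) : Prop :=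
  forall u v, U u v ->
    inner (Y u v) (Y u v) = 0 /\
    cinner (Yz_of (Yu u v) (Yv u v)) (Yz_of (Yu u v) (Yv u v)) = (0, 0) /\
    cinner (Yz_of (Yu u v) (Yv u v)) (Yzb_of (Yu u v) (Yv u v)) = (1/2, 0).

Definition conformal_gauss_map (U : R -> R -> Prop)
    (Y Yu Yv Yuu Yvv psi : R -> R -> V5) : Prop :=
  forall u v, U u v ->
    inner (psi u v) (psi u v) = 1 /\
    inner (psi u v) (Y u v) = 0 /\
    cinner (creal (psi u v)) (Yz_of (Yu u v) (Yv u v)) = (0, 0) /\
    cinner (creal (psi u v)) (Yzb_of (Yu u v) (Yv u v)) = (0, 0) /\
    cinner (creal (psi u v)) (Yzzb_of (Yuu u v) (Yvv u v)) = (0, 0).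

(** Willmore: the conformal Gauss map is harmonic into S^4_1,
    i.e. psi_uu + psi_vv is normal (parallel to psi). *)
Definition willmore_cgm (U : R -> R -> Prop) (psi psiuu psivv : R -> R -> V5) : Prop :=
  forall u v, U u v -> exists lam : R,
    vadd (psiuu u v) (psivv u v) = vscal lam (psi u v).

Definition cscal (s : R * R) (X : CV5) : CV5 :=
  mkCV5 (vadd (vscal (fst s) (re X)) (vscal (- snd s) (im X)))
        (vadd (vscal (fst s) (im X)) (vscal (snd s) (re X))).
Definition cadd (X Y : CV5) : CV5 := mkCV5 (vadd (re X) (re Y)) (vadd (im X) (im Y)).
Definition czero : CV5 := mkCV5 vzero vzero.

Definition kappa_decomp (Y Yu Yv Yuu Yuv Yvv : V5) (s : R * R) (kappa : CV5) : Prop :=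
  Yzz_of Yuu Yuv Yvv = cadd (cscal (- fst s / 2, - snd s / 2) (creal Y)) kappa /\
  cinner kappa (creal Y) = (0, 0) /\
  cinner kappa (Yz_of Yu Yv) = (0, 0) /\
  cinner kappa (Yzb_of Yu Yv) = (0, 0) /\
  cinner kappa (Yzzb_of Yuu Yvv) = (0, 0).

Definition umbilic (Y Yu Yv Yuu Yuv Yvv : V5) : Prop :=
  forall s kappa, kappa_decomp Y Yu Yv Yuu Yuv Yvv s kappa -> kappa = czero.

(* Main.v *)
Require Import Defs.
From Stdlib Require Import Reals Lra Lia.
Open Scope R_scope.
Open Scope R_scope.
Definition setc (k : nat) (X : V5) (c : R) : V5 :=
  match k with
  | 0 => mkV5 c (x1 X) (x2 X) (x3 X) (x4 X)
  | 1 => mkV5 (x0 X) c (x2 X) (x3 X) (x4 X)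
  | 2 => mkV5 (x0 X) (x1 X) c (x3 X) (x4 X)
  | 3 => mkV5 (x0 X) (x1 X) (x2 X) c (x4 X)
  | _ => mkV5 (x0 X) (x1 X) (x2 X) (x3 X) c end.

Definition wcomp (X : V5) (k : nat) : R := match k with 0 => - x0 X | _ => Defs.comp X k end.

Lemma cramer_k (k : nat) (e1 e2 e3 e4 e5 X : V5) : (k <= 4)%nat ->
  det5 e1 e2 e3 e4 e5 * wcomp X k =
  det5 (setc k e1 (inner e1 X)) (setc k e2 (inner e2 X)) (setc k e3 (inner e3 X))
       (setc k e4 (inner e4 X)) (setc k e5 (inner e5 X)).
Proof.
  intro Hk.
  destruct e1, e2, e3, e4, e5, X.
  do 5 (destruct k as [|k]; [cbv [det5 det sumto minor Defs.comp Nat.ltb Nat.leb setc wcomp inner]; simpl; ring|]).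
  lia.
Qed.

Lemma inner_zero_r X : inner X vzero = 0.
Proof. destruct X; unfold inner, vzero; simpl; ring. Qed.

Lemma cramer (e1 e2 e3 e4 e5 X : V5) : det5 e1 e2 e3 e4 e5 = 1 ->
  inner e1 X = 0 -> inner e2 X = 0 -> inner e3 X = 0 -> inner e4 X = 0 -> inner e5 X = 0 ->
  X = vzero.
Proof.
  intros Hd H1 H2 H3 H4 H5.
  assert (W : forall k, (k <= 4)%nat -> wcomp X k = 0).
  { intros k Hk. pose proof (cramer_k k e1 e2 e3 e4 e5 X Hk) as E.
    pose proof (cramer_k k e1 e2 e3 e4 e5 vzero Hk) as E0.
    rewrite H1, H2, H3, H4, H5, Hd in E. rewrite !inner_zero_r, Hd in E0.
    rewrite <- E0 in E. destruct k as [|[|[|[|[|]]]]]; simpl in *; lra. }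
  destruct X as [a0 a1 a2 a3 a4].
  pose proof (W 0%nat ltac:(lia)); pose proof (W 1%nat ltac:(lia)); pose proof (W 2%nat ltac:(lia));
  pose proof (W 3%nat ltac:(lia)); pose proof (W 4%nat ltac:(lia)); simpl in *.
  unfold vzero; f_equal; lra.
Qed.

Lemma dplus f g x a b l : derivable_pt_lim f x a -> derivable_pt_lim g x b -> l = a + b ->
  derivable_pt_lim (fun y => f y + g y) x l.
Proof. intros H1 H2 ->. exact (derivable_pt_lim_plus f g x a b H1 H2). Qed.
Lemma dmult f g x a b l : derivable_pt_lim f x a -> derivable_pt_lim g x b -> l = a * g x + f x * b ->
  derivable_pt_lim (fun y => f y * g y) x l.
Proof. intros H1 H2 ->. exact (derivable_pt_lim_mult f g x a b H1 H2). Qed.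
Lemma dopp f x a l : derivable_pt_lim f x a -> l = - a ->
  derivable_pt_lim (fun y => - f y) x l.
Proof. intros H1 ->. exact (derivable_pt_lim_opp f x a H1). Qed.

Lemma D_inner (F G : R -> V5) (dF dG : V5) x :
  (forall i, derivable_pt_lim (fun y => Defs.comp (F y) i) x (Defs.comp dF i)) ->
  (forall i, derivable_pt_lim (fun y => Defs.comp (G y) i) x (Defs.comp dG i)) ->
  derivable_pt_lim (fun y => inner (F y) (G y)) x (inner dF (G x) + inner (F x) dG).
Proof.
  intros HF HG.
  pose proof (HF 0%nat) as F0; pose proof (HF 1%nat) as F1; pose proof (HF 2%nat) as F2;
  pose proof (HF 3%nat) as F3; pose proof (HF 4%nat) as F4;
  pose proof (HG 0%nat) as G0; pose proof (HG 1%nat) as G1; pose proof (HG 2%nat) as G2;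
  pose proof (HG 3%nat) as G3; pose proof (HG 4%nat) as G4; simpl in *.
  unfold inner.
  repeat (first [eapply dplus | eapply dmult | eapply dopp]);
  try (match goal with |- derivable_pt_lim _ _ _ => eassumption end).
  all: first [reflexivity | simpl; ring].
Qed.

Lemma D_ext f g x l : derivable_pt_lim f x l ->
  (exists e, 0 < e /\ forall y, Rabs (y - x) < e -> f y = g y) -> derivable_pt_lim g x l.
Proof.
  intros H [e [He Hfg]] eps Heps.
  destruct (H eps Heps) as [d Hd].
  assert (Hm : 0 < Rmin d e) by (apply Rmin_pos; [apply cond_pos|exact He]).
  exists (mkposreal _ Hm). intros h Hh0 Hh. simpl in Hh.
  rewrite <- (Hfg (x + h)), <- (Hfg x).
  - apply Hd; auto. eapply Rlt_le_trans; [exact Hh| apply Rmin_l].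
  - rewrite Rminus_diag, Rabs_R0; exact He.
  - replace (x + h - x) with h by ring. eapply Rlt_le_trans; [exact Hh| apply Rmin_r].
Qed.

Lemma D_zero f x d c : derivable_pt_lim f x d ->
  (exists e, 0 < e /\ forall y, Rabs (y - x) < e -> f y = c) -> d = 0.
Proof.
  intros H [e [He Hf]].
  assert (H0 : derivable_pt_lim f x 0).
  { apply (D_ext (fct_cte c)). apply derivable_pt_lim_const.
    exists e; split; auto. intros y Hy; rewrite Hf; auto. }
  exact (uniqueness_limite f x d 0 H H0).
Qed.

Lemma sq_lt h e : 0 < e -> Rabs h < e -> h ^ 2 < e ^ 2.
Proof. intros He Hh. pose proof (Rabs_pos h). rewrite <- (pow2_abs h). nra. Qed.

Lemma open_h U u v : open2 U -> U u v -> exists e, 0 < e /\ forall x, Rabs (x - u) < e -> U x v.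
Proof.
  intros HO Hu. destruct (HO u v Hu) as [e [He Hb]]. exists e; split; auto.
  intros x Hx. apply Hb. replace ((v - v)^2) with 0 by ring. rewrite Rplus_0_r. apply sq_lt; auto.
Qed.
Lemma open_v U u v : open2 U -> U u v -> exists e, 0 < e /\ forall y, Rabs (y - v) < e -> U u y.
Proof.
  intros HO Hu. destruct (HO u v Hu) as [e [He Hb]]. exists e; split; auto.
  intros y Hy. apply Hb. replace ((u - u)^2) with 0 by ring. rewrite Rplus_0_l. apply sq_lt; auto.
Qed.

Lemma Z_u U (phi : R -> R -> R) c u v d : open2 U -> U u v ->
  (forall u' v', U u' v' -> phi u' v' = c) ->
  derivable_pt_lim (fun x => phi x v) u d -> d = 0.
Proof.
  intros HO Hu Hc Hd. destruct (open_h U u v HO Hu) as [e [He Hb]].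
  apply (D_zero _ u d c Hd). exists e; split; auto.
Qed.
Lemma Z_v U (phi : R -> R -> R) c u v d : open2 U -> U u v ->
  (forall u' v', U u' v' -> phi u' v' = c) ->
  derivable_pt_lim (fun y => phi u y) v d -> d = 0.
Proof.
  intros HO Hu Hc Hd. destruct (open_v U u v HO Hu) as [e [He Hb]].
  apply (D_zero _ v d c Hd). exists e; split; auto.
Qed.

Lemma clairaut U (f fu fv fuv : R -> R -> V5) u v : open2 U -> U u v -> smooth2 U f ->
  has_pu U f fu -> has_pv U f fv -> has_pv U fu fuv ->
  forall i, derivable_pt_lim (fun x => Defs.comp (fv x v) i) u (Defs.comp (fuv u v) i).
Proof.
  intros HO Hu Hs Hfu Hfv Hfuv i.
  destruct (Hs i) as [D [D0 DS]].
  assert (D10 : forall u' v', U u' v' -> D 1%nat 0%nat u' v' = Defs.comp (fu u' v') i).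
  { intros u' v' H'. destruct (DS 0%nat 0%nat u' v' H') as [A _].
    destruct (open_h U u' v' HO H') as [e [He Hb]].
    apply (uniqueness_limite (fun x => D 0%nat 0%nat x v')  u'); auto.
    apply (D_ext (fun x => Defs.comp (f x v') i)). apply Hfu; auto.
    exists e; split; auto. intros y Hy. rewrite D0; auto. }
  assert (D01 : forall u' v', U u' v' -> D 0%nat 1%nat u' v' = Defs.comp (fv u' v') i).
  { intros u' v' H'. destruct (DS 0%nat 0%nat u' v' H') as [_ A].
    destruct (open_v U u' v' HO H') as [e [He Hb]].
    apply (uniqueness_limite (fun y => D 0%nat 0%nat u' y)  v'); auto.
    apply (D_ext (fun y => Defs.comp (f u' y) i)). apply Hfv; auto.
    exists e; split; auto. intros y Hy. rewrite D0; auto. }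
  assert (D11 : D 1%nat 1%nat u v = Defs.comp (fuv u v) i).
  { destruct (DS 1%nat 0%nat u v Hu) as [_ A].
    destruct (open_v U u v HO Hu) as [e [He Hb]].
    apply (uniqueness_limite (fun y => D 1%nat 0%nat u y)  v); auto.
    apply (D_ext (fun y => Defs.comp (fu u y) i)). apply Hfuv; auto.
    exists e; split; auto. intros y Hy. rewrite D10; auto. }
  rewrite <- D11. destruct (DS 0%nat 1%nat u v Hu) as [A _].
  destruct (open_h U u v HO Hu) as [e [He Hb]].
  apply (D_ext (fun x => D 0%nat 1%nat x v)); auto.
  exists e; split; auto.
Qed.

Lemma il_add X Y Z : inner (vadd X Y) Z = inner X Z + inner Y Z.
Proof. destruct X, Y, Z; unfold inner, vadd; simpl; ring. Qed.
Lemma ir_add X Y Z : inner Z (vadd X Y) = inner Z X + inner Z Y.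
Proof. destruct X, Y, Z; unfold inner, vadd; simpl; ring. Qed.
Lemma il_sc c X Z : inner (vscal c X) Z = c * inner X Z.
Proof. destruct X, Z; unfold inner, vscal; simpl; ring. Qed.
Lemma ir_sc c X Z : inner Z (vscal c X) = c * inner Z X.
Proof. destruct X, Z; unfold inner, vscal; simpl; ring. Qed.
Lemma il_0 X : inner vzero X = 0.
Proof. destruct X; unfold inner, vzero; simpl; ring. Qed.
Lemma isym X Y : inner X Y = inner Y X.
Proof. destruct X, Y; unfold inner; simpl; ring. Qed.

Lemma vec_eq (X Y : V5) : (forall i, Defs.comp X i = Defs.comp Y i) -> X = Y.
Proof.
  intro H. destruct X, Y. pose proof (H 0%nat); pose proof (H 1%nat); pose proof (H 2%nat);
  pose proof (H 3%nat); pose proof (H 4%nat); simpl in *; subst; reflexivity.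
Qed.

Lemma int_nbhd a b t : inI a b t -> exists e, 0 < e /\ forall y, Rabs (y - t) < e -> inI a b y.
Proof.
  intros [H1 H2]. exists (Rmin (t - a) (b - t)). split.
  - apply Rmin_pos; lra.
  - intros y Hy. apply Rabs_def2 in Hy. destruct Hy as [Hy1 Hy2].
    pose proof (Rmin_l (t-a) (b-t)); pose proof (Rmin_r (t-a) (b-t)). unfold inI; lra.
Qed.

Lemma solve_P X c A B : X = vadd (vscal c A) B -> B = vadd X (vscal (- c) A).
Proof. intros ->. destruct A, B; unfold vadd, vscal; simpl; f_equal; ring. Qed.

Lemma sub_zero X W : vadd X (vscal (-1) W) = vzero -> X = W.
Proof.
  destruct X, W; unfold vadd, vscal, vzero; simpl; intro H; injection H; intros.
  f_equal; lra.
Qed.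

Lemma yzz_decomp y yuu yuv yvv s1 s2 :
  Yzz_of yuu yuv yvv = cadd (cscal (- s1 / 2, - s2 / 2) (creal y))
    (mkCV5 (vadd (vscal (1/4) (vadd yuu (vscal (-1) yvv))) (vscal (s1/2) y))
           (vadd (vscal (-1/2) yuv) (vscal (s2/2) y))).
Proof.
  destruct y, yuu, yuv, yvv; unfold Yzz_of, cadd, cscal, creal, vadd, vscal, vzero; simpl.
  f_equal; f_equal; field.
Qed.

Lemma vz_of X c d : c = 0 -> d = 0 -> vadd (vscal (- c) X) (vscal d X) = vzero.
Proof. intros -> ->. destruct X; unfold vadd, vscal, vzero; simpl; f_equal; ring. Qed.
Lemma vz_of2 X Z c d : c = 0 -> d = 0 -> vadd (vscal (- c) X) (vscal d Z) = vzero.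
Proof. intros -> ->. destruct X, Z; unfold vadd, vscal, vzero; simpl; f_equal; ring. Qed.
Ltac canon y0 yh p1 p2 ps yv yuu yuv yvv := rewrite ?(isym yh y0), ?(isym p1 y0), ?(isym p2 y0), ?(isym ps y0), ?(isym yv y0), ?(isym yuu y0), ?(isym yuv y0), ?(isym yvv y0), ?(isym p1 yh), ?(isym p2 yh), ?(isym ps yh), ?(isym yv yh), ?(isym yuu yh), ?(isym yuv yh), ?(isym yvv yh), ?(isym p2 p1), ?(isym ps p1), ?(isym yv p1), ?(isym yuu p1), ?(isym yuv p1), ?(isym yvv p1), ?(isym ps p2), ?(isym yv p2), ?(isym yuu p2), ?(isym yuv p2), ?(isym yvv p2), ?(isym yv ps), ?(isym yuu ps), ?(isym yuv ps), ?(isym yvv ps), ?(isym yuu yv), ?(isym yuv yv), ?(isym yvv yv), ?(isym yuv yuu), ?(isym yvv yuu), ?(isym yvv yuv) in *.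
Ltac lin := do 3 rewrite ?il_add, ?ir_add, ?il_sc, ?ir_sc, ?il_0, ?inner_zero_r.
Ltac linH H := do 3 rewrite ?il_add, ?ir_add, ?il_sc, ?ir_sc, ?il_0, ?inner_zero_r in H.
Ltac linA := do 3 rewrite ?il_add, ?ir_add, ?il_sc, ?ir_sc, ?il_0, ?inner_zero_r in *.

Theorem mainTheorem11
  (a b : R) (Hab : a < b)
  (* Bjoerling data on I = (a,b) *)
  (psi0 psi0u Y0 Y0u Yh0 Yh0u P1 P1u P2 P2u : R -> V5)
  (gamma12 mu1 mu2 rho1 rho2 k1 k2 gamma11 : R -> R)
  (Hpsi0an : vanalytic_on a b psi0)
  (Hpsi0d : has_deriv a b psi0 psi0u)
  (Hpsi0S : forall t, inI a b t -> inner (psi0 t) (psi0 t) = 1)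
  (Hpsi0nc : exists t1 t2, inI a b t1 /\ inI a b t2 /\ psi0 t1 <> psi0 t2)
  (HY0an : vanalytic_on a b Y0)
  (HY0d : has_deriv a b Y0 Y0u)
  (HY0null : forall t, inI a b t -> inner (Y0 t) (Y0 t) = 0)
  (HY0psi : forall t, inI a b t -> inner (Y0 t) (psi0 t) = 0)
  (HY0psiu : forall t, inI a b t -> inner (Y0 t) (psi0u t) = 0)
  (HY0u : forall t, inI a b t -> inner (Y0u t) (Y0u t) = 1)
  (HYh0an : vanalytic_on a b Yh0)
  (HYh0d : has_deriv a b Yh0 Yh0u)
  (HYh0null : forall t, inI a b t -> inner (Yh0 t) (Yh0 t) = 0)
  (HYh0psi : forall t, inI a b t -> inner (psi0 t) (Yh0 t) = 0)
  (HYh0Y0 : forall t, inI a b t -> inner (Y0 t) (Yh0 t) = -1)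
  (Hg12an : analytic_on a b gamma12)
  (HP1d : has_deriv a b P1 P1u)
  (HP2d : has_deriv a b P2 P2u)
  (HP1unit : forall t, inI a b t -> inner (P1 t) (P1 t) = 1)
  (HP1mod : forall t, inI a b t -> exists c, P1 t = vadd (Y0u t) (vscal c (Y0 t)))
  (HP1Yh : forall t, inI a b t -> inner (P1 t) (Yh0 t) = 0)
  (HP2unit : forall t, inI a b t -> inner (P2 t) (P2 t) = 1)
  (HP2perp : forall t, inI a b t ->
     inner (P2 t) (psi0 t) = 0 /\ inner (P2 t) (Y0 t) = 0 /\
     inner (P2 t) (Yh0 t) = 0 /\ inner (P2 t) (P1 t) = 0)
  (Hdet : forall t, inI a b t -> det5 (Y0 t) (Yh0 t) (P1 t) (P2 t) (psi0 t) = 1)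
  (* structure equations *)
  (HsY0 : forall t, inI a b t ->
     Y0u t = vadd (vscal (- mu1 t) (Y0 t)) (P1 t))
  (HsYh0 : forall t, inI a b t ->
     Yh0u t = vadd (vscal (mu1 t) (Yh0 t)) (vadd (vscal (rho1 t) (P1 t))
                (vadd (vscal (rho2 t) (P2 t)) (vscal (4 * gamma11 t) (psi0 t)))))
  (HsP1 : forall t, inI a b t ->
     P1u t = vadd (vscal (mu2 t) (P2 t)) (vadd (vscal (2 * k1 t) (psi0 t))
                (vadd (Yh0 t) (vscal (rho1 t) (Y0 t)))))
  (HsP2 : forall t, inI a b t ->
     P2u t = vadd (vscal (- mu2 t) (P1 t)) (vadd (vscal (- (2 * k2 t)) (psi0 t))
                (vscal (rho2 t) (Y0 t))))
  (Hspsi0 : forall t, inI a b t ->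
     psi0u t = vadd (vscal (- (2 * k1 t)) (P1 t)) (vadd (vscal (2 * k2 t) (P2 t))
                (vscal (4 * gamma11 t) (Y0 t))))
  (* the resulting Willmore surface y = [Y] on a neighbourhood U of I *)
  (U : R -> R -> Prop) (HUopen : open2 U) (HUI : forall t, inI a b t -> U t 0)
  (Y Yu Yv Yuu Yuv Yvv psi psiu psiv psiuu psivv : R -> R -> V5)
  (HYsm : smooth2 U Y) (Hpsism : smooth2 U psi)
  (HYu : has_pu U Y Yu) (HYv : has_pv U Y Yv)
  (HYuu : has_pu U Yu Yuu) (HYuv : has_pv U Yu Yuv) (HYvv : has_pv U Yv Yvv)
  (Hpsiu : has_pu U psi psiu) (Hpsiv : has_pv U psi psiv)
  (Hpsiuu : has_pu U psiu psiuu) (Hpsivv : has_pv U psiv psivv)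
  (Hcan : canonical_lift U Y Yu Yv)
  (Hcgm : conformal_gauss_map U Y Yu Yv Yuu Yvv psi)
  (Hwill : willmore_cgm U psi psiuu psivv)
  (HYI : forall t, inI a b t -> Y t 0 = Y0 t)
  (HpsiI : forall t, inI a b t -> psi t 0 = psi0 t)
  (Hg12 : forall t, inI a b t -> inner (psiv t 0) (Yh0 t) = - 4 * gamma12 t) :
  (forall t, inI a b t -> umbilic (Y t 0) (Yu t 0) (Yv t 0) (Yuu t 0) (Yuv t 0) (Yvv t 0))
  <-> (forall t, inI a b t -> k1 t = 0 /\ k2 t = 0).
Proof.
  assert (F1 : forall u v, U u v -> inner (Y u v) (Y u v) = 0) by (intros u v H; apply (Hcan u v H)).
  assert (F4 : forall u v, U u v -> inner (Yu u v) (Yu u v) = 1 /\ inner (Yv u v) (Yv u v) = 1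
              /\ inner (Yu u v) (Yv u v) = 0).
  { intros u v H. destruct (Hcan u v H) as [_ [E1 E2]].
    unfold cinner, Yz_of, Yzb_of in E1, E2; simpl in E1, E2.
    injection E1; injection E2; intros. rewrite !il_sc, !ir_sc in *.
    rewrite (isym (Yv u v) (Yu u v)) in *. lra. }
  assert (F2 : forall u v, U u v -> inner (Y u v) (Yu u v) = 0).
  { intros u v H. pose proof (D_inner (fun x => Y x v) (fun x => Y x v) (Yu u v) (Yu u v) u
       (HYu u v H) (HYu u v H)) as D.
    apply (Z_u U (fun x y => inner (Y x y) (Y x y)) 0) in D; auto.
    rewrite isym in D; lra. }
  assert (F3 : forall u v, U u v -> inner (Y u v) (Yv u v) = 0).
  { intros u v H. pose proof (D_inner (fun y => Y u y) (fun y => Y u y) (Yv u v) (Yv u v) v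
       (HYv u v H) (HYv u v H)) as D.
    apply (Z_v U (fun x y => inner (Y x y) (Y x y)) 0) in D; auto.
    rewrite isym in D; lra. }
  assert (H12 : forall u v, U u v -> inner (psi u v) (Yu u v) = 0 /\ inner (psi u v) (Yv u v) = 0).
  { intros u v H. destruct (Hcgm u v H) as [_ [_ [E1 _]]].
    unfold cinner, Yz_of, creal in E1; simpl in E1. injection E1; intros.
    rewrite !il_0, ?inner_zero_r, !ir_sc in *. lra. }
  assert (Pt : forall t, inI a b t ->
    umbilic (Y t 0) (Yu t 0) (Yv t 0) (Yuu t 0) (Yuv t 0) (Yvv t 0) <-> (k1 t = 0 /\ k2 t = 0)).
  { intros t Ht. pose proof (HUI t Ht) as HU.
    pose proof (clairaut U Y Yu Yv Yuv t 0 HUopen HU HYsm HYu HYv HYuv) as CL.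
    assert (G1 : inner (Y t 0) (Yuu t 0) = -1).
    { pose proof (D_inner (fun x => Y x 0) (fun x => Yu x 0) _ _ t (HYu t 0 HU) (HYuu t 0 HU)) as D.
      apply (Z_u U (fun x y => inner (Y x y) (Yu x y)) 0) in D; auto.
      pose proof (F4 t 0 HU); lra. }
    assert (G2 : inner (Y t 0) (Yvv t 0) = -1).
    { pose proof (D_inner (fun y => Y t y) (fun y => Yv t y) _ _ 0 (HYv t 0 HU) (HYvv t 0 HU)) as D.
      apply (Z_v U (fun x y => inner (Y x y) (Yv x y)) 0) in D; auto.
      pose proof (F4 t 0 HU); lra. }
    assert (G3 : inner (Y t 0) (Yuv t 0) = 0).
    { pose proof (D_inner (fun y => Y t y) (fun y => Yu t y) _ _ 0 (HYv t 0 HU) (HYuv t 0 HU)) as D.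
      apply (Z_v U (fun x y => inner (Y x y) (Yu x y)) 0) in D; auto.
      pose proof (F4 t 0 HU). rewrite isym in D; lra. }
    assert (G4 : inner (Yuu t 0) (Yu t 0) = 0).
    { pose proof (D_inner (fun x => Yu x 0) (fun x => Yu x 0) _ _ t (HYuu t 0 HU) (HYuu t 0 HU)) as D.
      apply (Z_u U (fun x y => inner (Yu x y) (Yu x y)) 1) in D; [idtac|auto|auto|intros ? ? Hq; apply F4; auto].
      rewrite (isym (Yu t 0)) in D; lra. }
    assert (G5 : inner (Yuv t 0) (Yu t 0) = 0).
    { pose proof (D_inner (fun y => Yu t y) (fun y => Yu t y) _ _ 0 (HYuv t 0 HU) (HYuv t 0 HU)) as D.
      apply (Z_v U (fun x y => inner (Yu x y) (Yu x y)) 1) in D; [idtac|auto|auto|intros ? ? Hq; apply F4; auto].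
      rewrite (isym (Yu t 0)) in D; lra. }
    assert (G6 : inner (Yvv t 0) (Yv t 0) = 0).
    { pose proof (D_inner (fun y => Yv t y) (fun y => Yv t y) _ _ 0 (HYvv t 0 HU) (HYvv t 0 HU)) as D.
      apply (Z_v U (fun x y => inner (Yv x y) (Yv x y)) 1) in D; [idtac|auto|auto|intros ? ? Hq; apply F4; auto].
      rewrite (isym (Yv t 0)) in D; lra. }
    assert (G7 : inner (Yuv t 0) (Yv t 0) = 0).
    { pose proof (D_inner (fun x => Yv x 0) (fun x => Yv x 0) _ _ t CL CL) as D.
      apply (Z_u U (fun x y => inner (Yv x y) (Yv x y)) 1) in D; [idtac|auto|auto|intros ? ? Hq; apply F4; auto].
      rewrite (isym (Yv t 0)) in D; lra. }
    assert (G8 : inner (Yuu t 0) (Yv t 0) = 0).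
    { pose proof (D_inner (fun x => Yu x 0) (fun x => Yv x 0) _ _ t (HYuu t 0 HU) CL) as D.
      apply (Z_u U (fun x y => inner (Yu x y) (Yv x y)) 0) in D; [idtac|auto|auto|intros ? ? Hq; apply F4; auto].
      rewrite (isym (Yu t 0)) in D; lra. }
    assert (G9 : inner (Yu t 0) (Yvv t 0) = 0).
    { pose proof (D_inner (fun y => Yu t y) (fun y => Yv t y) _ _ 0 (HYuv t 0 HU) (HYvv t 0 HU)) as D.
      apply (Z_v U (fun x y => inner (Yu x y) (Yv x y)) 0) in D; [idtac|auto|auto|intros ? ? Hq; apply F4; auto].
      lra. }
    assert (H5 : inner (Yuu t 0) (psi t 0) + inner (Yu t 0) (psiu t 0) = 0).
    { pose proof (D_inner (fun x => Yu x 0) (fun x => psi x 0) _ _ t (HYuu t 0 HU) (Hpsiu t 0 HU)) as D.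
      apply (Z_u U (fun x y => inner (Yu x y) (psi x y)) 0) in D;
        [lra|auto|auto|intros ? ? Hq; rewrite isym; apply H12; auto]. }
    assert (H6 : inner (Yuv t 0) (psi t 0) + inner (Yv t 0) (psiu t 0) = 0).
    { pose proof (D_inner (fun x => Yv x 0) (fun x => psi x 0) _ _ t CL (Hpsiu t 0 HU)) as D.
      apply (Z_u U (fun x y => inner (Yv x y) (psi x y)) 0) in D;
        [lra|auto|auto|intros ? ? Hq; rewrite isym; apply H12; auto]. }
    assert (H3 : inner (psi t 0) (Yuu t 0) + inner (psi t 0) (Yvv t 0) = 0).
    { destruct (Hcgm t 0 HU) as [_ [_ [_ [_ E]]]].
      unfold cinner, Yzzb_of, creal in E; simpl in E. injection E; intros.
      rewrite ?il_0, ?inner_zero_r, ?ir_sc, ?ir_add in *. lra. }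
    assert (H4 : inner (psi t 0) (Y t 0) = 0) by apply (Hcgm t 0 HU).
    destruct (H12 t 0 HU) as [H1 H2].
    pose proof (F1 t 0 HU) as F1t; pose proof (F2 t 0 HU) as F2t; pose proof (F3 t 0 HU) as F3t;
    pose proof (F4 t 0 HU) as F4t.
    assert (EYu : Yu t 0 = Y0u t).
    { apply vec_eq; intro i. apply (uniqueness_limite (fun x => Defs.comp (Y0 x) i) t).
      - apply (D_ext (fun x => Defs.comp (Y x 0) i)). apply HYu; auto.
        destruct (int_nbhd a b t Ht) as [e [He Hb]]. exists e; split; auto.
        intros y Hy; rewrite HYI; auto.
      - apply HY0d; auto. }
    assert (Epsu : psiu t 0 = psi0u t).
    { apply vec_eq; intro i. apply (uniqueness_limite (fun x => Defs.comp (psi0 x) i) t).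
      - apply (D_ext (fun x => Defs.comp (psi x 0) i)). apply Hpsiu; auto.
        destruct (int_nbhd a b t Ht) as [e [He Hb]]. exists e; split; auto.
        intros y Hy; rewrite HpsiI; auto.
      - apply Hpsi0d; auto. }
    rewrite EYu, HsY0 in * by auto. rewrite Epsu, Hspsi0 in * by auto.
    rewrite (HYI t Ht), (HpsiI t Ht) in *.
    linA.
    pose proof (HY0null t Ht) as g1. pose proof (HYh0Y0 t Ht) as g2. pose proof (HYh0psi t Ht) as g3.
    pose proof (HP1Yh t Ht) as g4. destruct (HP2perp t Ht) as [g5 [g6 [g7 g8]]].
    pose proof (HP1unit t Ht) as g9. pose proof (HP2unit t Ht) as g10. pose proof (Hpsi0S t Ht) as g11.
    pose proof (HYh0null t Ht) as g12. pose proof (HY0psi t Ht) as g13.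
    canon (Y0 t) (Yh0 t) (P1 t) (P2 t) (psi0 t) (Yv t 0) (Yuu t 0) (Yuv t 0) (Yvv t 0).
    rewrite g1 in *.
    assert (g14 : inner (Y0 t) (P1 t) = 0) by lra. rewrite g14 in *.
    rewrite g13 in *.
    assert (g15 : inner (P1 t) (psi0 t) = 0) by lra. rewrite g15 in *.
    rewrite ?g2, ?g3, ?g4, ?g5, ?g6, ?g7, ?g8, ?g9, ?g10, ?g11, ?g12 in *.
    assert (DL : forall X, inner (Y0 t) X = 0 -> inner (P1 t) X = 0 -> inner (psi0 t) X = 0 ->
      X = vadd (vscal (- inner (Yh0 t) X) (Y0 t)) (vscal (inner (P2 t) X) (P2 t))).
    { intros X h1 h2 h3. apply sub_zero.
      apply (cramer (Y0 t) (Yh0 t) (P1 t) (P2 t) (psi0 t)); [apply Hdet; auto| | | | | ]; lin;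
      canon (Y0 t) (Yh0 t) (P1 t) (P2 t) (psi0 t) (Yv t 0) (Yuu t 0) (Yuv t 0) (Yvv t 0);
      rewrite ?g1, ?g2, ?g3, ?g4, ?g5, ?g6, ?g7, ?g8, ?g9, ?g10, ?g11, ?g12, ?g13, ?g14, ?g15; lra. }
    rewrite F3t in *. assert (Pv : inner (P1 t) (Yv t 0) = 0) by (pose proof (proj2 (proj2 F4t)); lra).
    pose proof (DL (Yv t 0) F3t Pv H2) as Ev.
    remember (inner (Yh0 t) (Yv t 0)) as cv. remember (inner (P2 t) (Yv t 0)) as dv.
    assert (Hdv : dv * dv = 1).
    { destruct F4t as [_ [F _]]. rewrite Ev in F. linH F.
      canon (Y0 t) (Yh0 t) (P1 t) (P2 t) (psi0 t) (Yv t 0) (Yuu t 0) (Yuv t 0) (Yvv t 0).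
      rewrite ?g1, ?g2, ?g3, ?g4, ?g5, ?g6, ?g7, ?g8, ?g9, ?g10, ?g11, ?g12, ?g13, ?g14, ?g15 in F. lra. }
    rewrite G1, G2, G3, Pv in *.
    assert (K5 : inner (psi0 t) (Yuu t 0) = 2 * k1 t) by lra.
    assert (K6 : inner (psi0 t) (Yuv t 0) = - 2 * k2 t * dv) by lra.
    assert (Kill : forall X, inner X (Y0 t) = 0 -> inner X (P1 t) = 0 -> inner X (Yv t 0) = 0 ->
       inner X (Yuu t 0) + inner X (Yvv t 0) = 0 -> inner X (psi0 t) = 0 -> X = vzero).
    { intros X h1 h2 h3 h4 h5. rewrite isym in h1, h2, h3, h5. rewrite !(isym X) in h4.
      pose proof (DL X h1 h2 h5) as EX.
      remember (inner (Yh0 t) X) as cx. remember (inner (P2 t) X) as dx.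
      rewrite EX in h3, h4. rewrite Ev in h3. linH h3. linH h4.
      canon (Y0 t) (Yh0 t) (P1 t) (P2 t) (psi0 t) (Yv t 0) (Yuu t 0) (Yuv t 0) (Yvv t 0).
      rewrite ?g1, ?g2, ?g3, ?g4, ?g5, ?g6, ?g7, ?g8, ?g9, ?g10, ?g11, ?g12, ?g13, ?g14, ?g15 in h3. rewrite ?g1, ?g2, ?g3, ?g4, ?g5, ?g6, ?g7, ?g8, ?g9, ?g10, ?g11, ?g12, ?g13, ?g14, ?g15 in h4. rewrite ?G1, ?G2 in h4.
      assert (E1 : dx * dv = 0) by lra.
      assert (E2 : dx = 0) by nra.
      rewrite E2 in h4. assert (E3 : cx = 0) by lra.
      rewrite EX. apply vz_of2; auto. }
    split.
    - intro Hum.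
      remember (inner (vscal (1/4) (vadd (Yuu t 0) (vscal (-1) (Yvv t 0)))) (vadd (Yuu t 0) (Yvv t 0))) as s1.
      remember (inner (vscal (-1/2) (Yuv t 0)) (vadd (Yuu t 0) (Yvv t 0))) as s2.
      specialize (Hum (s1, s2) (mkCV5 (vadd (vscal (1/4) (vadd (Yuu t 0) (vscal (-1) (Yvv t 0)))) (vscal (s1/2) (Y0 t)))
           (vadd (vscal (-1/2) (Yuv t 0)) (vscal (s2/2) (Y0 t))))).
      assert (KA : vadd (vscal (1/4) (vadd (Yuu t 0) (vscal (-1) (Yvv t 0)))) (vscal (s1/2) (Y0 t)) = vzero /\
                   vadd (vscal (-1/2) (Yuv t 0)) (vscal (s2/2) (Y0 t)) = vzero).
      { assert (Hk : mkCV5 (vadd (vscal (1/4) (vadd (Yuu t 0) (vscal (-1) (Yvv t 0)))) (vscal (s1/2) (Y0 t)))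
           (vadd (vscal (-1/2) (Yuv t 0)) (vscal (s2/2) (Y0 t))) = czero).
        { apply Hum. split; [apply yzz_decomp|].
          linH Heqs1. linH Heqs2.
          unfold cinner, creal, Yz_of, Yzb_of, Yzzb_of; simpl.
          repeat split; f_equal; lin; canon (Y0 t) (Yh0 t) (P1 t) (P2 t) (psi0 t) (Yv t 0) (Yuu t 0) (Yuv t 0) (Yvv t 0);
          rewrite ?g1, ?g2, ?g3, ?g4, ?g5, ?g6, ?g7, ?g8, ?g9, ?g10, ?g11, ?g12, ?g13, ?g14, ?g15; rewrite ?G1, ?G2, ?G3, ?F3t, ?G4, ?G5, ?G6, ?G7, ?G8, ?G9; try lra. }
        split; [exact (f_equal re Hk) | exact (f_equal im Hk)]. }
      destruct KA as [KA KB].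
      apply (f_equal (fun W => inner (psi0 t) W)) in KA, KB. simpl in KA, KB.
      linH KA. linH KB. canon (Y0 t) (Yh0 t) (P1 t) (P2 t) (psi0 t) (Yv t 0) (Yuu t 0) (Yuv t 0) (Yvv t 0). rewrite ?g1, ?g2, ?g3, ?g4, ?g5, ?g6, ?g7, ?g8, ?g9, ?g10, ?g11, ?g12, ?g13, ?g14, ?g15 in KA. rewrite ?g1, ?g2, ?g3, ?g4, ?g5, ?g6, ?g7, ?g8, ?g9, ?g10, ?g11, ?g12, ?g13, ?g14, ?g15 in KB.
      assert (k1 t = 0) by lra.
      assert (k2 t * dv = 0) by lra.
      split; auto. nra.
    - intros [K1 K2] s kap Hdec. destruct kap as [A B].
      destruct Hdec as [EQ [O1 [O2 [O3 O4]]]].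
      pose proof (f_equal re EQ) as EQr; pose proof (f_equal im EQ) as EQi; unfold Yzz_of, cadd, cscal, creal in EQr, EQi; cbn [re im fst snd] in EQr, EQi.
      apply (f_equal (fun W => inner (psi0 t) W)) in EQr, EQi. cbv beta in EQr, EQi.
      linH EQr. linH EQi. canon (Y0 t) (Yh0 t) (P1 t) (P2 t) (psi0 t) (Yv t 0) (Yuu t 0) (Yuv t 0) (Yvv t 0). rewrite ?g1, ?g2, ?g3, ?g4, ?g5, ?g6, ?g7, ?g8, ?g9, ?g10, ?g11, ?g12, ?g13, ?g14, ?g15 in EQr. rewrite ?g1, ?g2, ?g3, ?g4, ?g5, ?g6, ?g7, ?g8, ?g9, ?g10, ?g11, ?g12, ?g13, ?g14, ?g15 in EQi.
      rewrite (isym (psi0 t) A) in EQr. rewrite (isym (psi0 t) B) in EQi.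
      rewrite K1 in K5. rewrite K2 in K6.
      unfold cinner, creal, Yz_of, Yzb_of, Yzzb_of in O1, O2, O3, O4; cbn [re im fst snd] in O1, O2, O3, O4.
      injection O1 as O1a O1b. injection O2 as O2a O2b. injection O3 as O3a O3b. injection O4 as O4a O4b.
      linH O1a. linH O1b. linH O2a. linH O2b. linH O3a. linH O3b. linH O4a. linH O4b.
      assert (a1 : inner A (Y0 t) = 0) by lra. assert (b1 : inner B (Y0 t) = 0) by lra.
      rewrite a1, b1 in *.
      assert (KA : A = vzero) by (apply Kill; lra).
      assert (KB : B = vzero) by (apply Kill; lra).
      rewrite KA, KB; reflexivity. }
  split; intros H t Ht; [apply (proj1 (Pt t Ht)) | apply (proj2 (Pt t Ht))]; auto.
Qed.
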